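(* Let $N$ be a finite set of services, all controlled by a single (monopolistic) seller, let $v:2^N\to\mathbb{R}_+$ be a monotone submodular valuation with $v(\emptyset)=0$, and let $X$ be a maximal decision map for $v$. Then $$\max_{p\in\mathbb{R}^N_+}u_1(p)=\max_{S\subseteq N}\sum_{i\in S}v(\{i\}\mid S\setminus\{i\}),$$ where $u_1(p)=\sum_{j\in N}p_j\cdot\mathbf{1}\{j\in X(p)\}$.
   Context: Marginal value $v(T\mid S)=v(S\cup T)-v(S)$; submodular means $v(S\cup T)+v(S\cap T)\le v(S)+v(T)$. For $p\in\mathbb{R}^N_+$, $p(S)=\sum_{j\in S}p_j$, $D(v;p)=\arg\max_{S\subseteq N}(v(S)-p(S))$. A decision map is $X:\mathbb{R}^N_+\to2^N$ with $X(p)\in D(v;p)$ for all $p$; it is maximal if for every $p$ there is no $S'\in D(v;p)$ with $X(p)\subsetneq S'$. The monopolistic seller chooses a price $p_j$ for each service and earns $u_1(p)$. *)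

(* Defs.v *)
From HB Require Import structures.
From mathcomp Require Import all_boot all_order all_algebra.
From mathcomp Require Import reals.
Set Implicit Arguments. Unset Strict Implicit. Unset Printing Implicit Defensive.
Import Order.TTheory GRing.Theory Num.Theory.
Local Open Scope ring_scope.

Section Defs.
Variables (R : realType) (N : finType).

Definition marg (v : {set N} -> R) (T S : {set N}) : R := v (S :|: T) - v S.

Definition monotone_val (v : {set N} -> R) :=
  forall S T : {set N}, S \subset T -> v S <= v T.

Definition submodular (v : {set N} -> R) :=
  forall S T : {set N}, v (S :|: T) + v (S :&: T) <= v S + v T.

Definition valuation (v : {set N} -> R) := (forall S, 0 <= v S) /\ v set0 = 0.

Definition nonneg_price (p : N -> R) := forall j, 0 <= p j.

Definition price (p : N -> R) (S : {set N}) : R := \sum_(j in S) p j.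

Definition demand (v : {set N} -> R) (p : N -> R) (S : {set N}) :=
  forall S' : {set N}, v S' - price p S' <= v S - price p S.

Definition decision_map (v : {set N} -> R) (X : (N -> R) -> {set N}) :=
  forall p, nonneg_price p -> demand v p (X p).

Definition maximal_decision_map (v : {set N} -> R) (X : (N -> R) -> {set N}) :=
  decision_map v X /\
  forall p, nonneg_price p ->
    ~ exists S' : {set N}, demand v p S' /\ X p \proper S'.

Definition revenue (X : (N -> R) -> {set N}) (p : N -> R) : R :=
  \sum_(j : N) p j * (j \in X p)%:R.

Definition marg_sum (v : {set N} -> R) (S : {set N}) : R :=
  \sum_(i in S) marg v [set i] (S :\ i).

End Defs.

(* Main.v *)
Require Import Defs.
From HB Require Import structures.
From mathcomp Require Import all_boot all_order all_algebra.
From mathcomp Require Import reals.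
From mathcomp Require Import lra.
Import Order.TTheory GRing.Theory Num.Theory.
Local Open Scope ring_scope.
Set Implicit Arguments.

Section Aux.
Variables (R : realType) (N : finType).
Implicit Types (v : {set N} -> R) (p : N -> R) (S T : {set N}).

Lemma price_D1 p S i : i \in S -> price p S = p i + price p (S :\ i).
Proof.
move=> iS; rewrite /price (bigD1 i) //=; congr (_ + _).
by apply: eq_bigl => j; rewrite !inE andbC.
Qed.

Lemma marg1 v S i : i \in S -> marg v [set i] (S :\ i) = v S - v (S :\ i).
Proof. by move=> iS; rewrite /marg setUC setD1K. Qed.

Lemma chain v S : submodular v -> forall n T, T \subset S -> #|S :\: T| = n ->
  v T + \sum_(i in S :\: T) (v S - v (S :\ i)) <= v S.
Proof.
move=> sub; elim=> [|n IH] T TS.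
  move/eqP; rewrite cards_eq0 => /eqP E.
  rewrite E big_set0 addr0.
  have ST : S \subset T by rewrite -setD_eq0 E.
  have -> : T = S by apply/eqP; rewrite eqEsubset TS ST.
  by [].
move=> cn.
have : (0 < #|S :\: T|)%N by rewrite cn.
case/card_gt0P => i iST.
have iS : i \in S by move: iST; rewrite inE => /andP[].
have iT : i \notin T by move: iST; rewrite inE => /andP[].
have T'S : i |: T \subset S by rewrite subUset sub1set iS TS.
have E : S :\: (i |: T) = (S :\: T) :\ i.
  by apply/setP => x; rewrite !inE; case: (x == i); rewrite ?andbF ?andbT.
have := IH (i |: T) T'S.
have cn' : #|S :\: T :\ i| = n by move: cn; rewrite (cardsD1 i) iST => -[].
rewrite E => /(_ cn') H.
rewrite (bigD1 i) //=.
have -> : \sum_(j in S :\: T | j != i) (v S - v (S :\ j)) =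
          \sum_(j in S :\: T :\ i) (v S - v (S :\ j)).
  by apply: eq_bigl => j; rewrite in_setD1 andbC.
have U : (i |: T) :|: (S :\ i) = S.
  apply/setP => x; rewrite !inE; case: (x =P i) => [->|_] /=; first by rewrite iS.
  by case xT: (x \in T) => //=; rewrite (subsetP TS x xT).
have I : (i |: T) :&: (S :\ i) = T.
  apply/setP => x; rewrite !inE; case: (x =P i) => [->|_] /=; first by rewrite (negbTE iT).
  by case xT: (x \in T) => //=; rewrite (subsetP TS x xT).
have := sub (i |: T) (S :\ i); rewrite U I => hs.
lra.
Qed.
End Aux.

Lemma revenue_price (R : realType) (N : finType) (X : (N -> R) -> {set N}) p :
  revenue X p = price p (X p).
Proof.
rewrite /revenue /price [RHS]big_mkcond; apply: eq_bigr => j _.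
by case: (j \in X p); rewrite ?mulr1 ?mulr0.
Qed.

Theorem mainTheorem14 (R : realType) (N : finType)
    (v : {set N} -> R) (X : (N -> R) -> {set N}) :
  valuation v -> monotone_val v -> submodular v ->
  maximal_decision_map v X ->
  (exists p : N -> R, nonneg_price p /\
     revenue X p = \big[Num.max/0]_(S : {set N}) marg_sum v S) /\
  (forall p : N -> R, nonneg_price p ->
     revenue X p <= \big[Num.max/0]_(S : {set N}) marg_sum v S).
Proof.
move=> [v0 vE] mon sub [dec maxd].
have mpos : forall S i, 0 <= v S - v (S :\ i).
  by move=> S i; rewrite subr_ge0; apply: mon; exact: subsetDl.
have msum0 : forall S, 0 <= marg_sum v S.
  move=> S; apply: sumr_ge0 => i iS; rewrite marg1 //.
split; last first.
  move=> p hp; rewrite revenue_price.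
  apply: le_trans (le_bigmax _ _ (X p)).
  apply: ler_sum => i iS; rewrite marg1 //.
  have := dec p hp (X p :\ i); rewrite /demand (price_D1 _ p iS) => h; lra.
have [S0 _ ->] := eq_bigmax (x:=0) set0 xpredT (marg_sum v) erefl
   (fun S _ => msum0 S).
pose p j := if j \in S0 then v S0 - v (S0 :\ j) else v setT + 1.
have hp : nonneg_price p.
  move=> j; rewrite /p; case: (j \in S0) => //.
  have := v0 setT; lra.
exists p; split => //.
have stepb : forall T : {set N}, T \subset S0 -> v T - price p T <= v S0 - price p S0.
  move=> T TS.
  have := chain sub TS erefl.
  move=> h; rewrite /price [X in _ <= v S0 - X](big_setID T) /= (setIidPr TS).
  have -> : \sum_(i in S0 :\: T) p i = \sum_(i in S0 :\: T) (v S0 - v (S0 :\ i)).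
    apply: eq_bigr => i; rewrite inE => /andP[_ iS].
    by rewrite /p iS.
  lra.
have dS0 : demand v p S0.
  move=> S'.
  suff : v S' - price p S' <= v (S' :&: S0) - price p (S' :&: S0).
    have := stepb (S' :&: S0) (subsetIr _ _); lra.
  case: (boolP (S' \subset S0)) => [h|].
    by rewrite (setIidPl h).
  case/subsetPn => j jS' jS0.
  rewrite {1}/price (big_setID S0) /=.
  have jD : j \in S' :\: S0 by rewrite inE jS' jS0.
  have := price_D1 _ p jD; rewrite /price => ->.
  have : 0 <= \sum_(i in S' :\: S0 :\ j) p i by apply: sumr_ge0 => i _.
  have : p j = v setT + 1 by rewrite /p (negbTE jS0).
  have := mon _ _ (subsetT S').
  have := v0 (S' :&: S0).
  lra.
have XS : X p \subset S0.
  apply/subsetP => j jX; apply/negPn/negP => jS0.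
  have := dec p hp (X p :\ j); rewrite /demand (price_D1 _ p jX) => h.
  have : p j = v setT + 1 by rewrite /p (negbTE jS0).
  have := mon _ _ (subsetT (X p)).
  have := v0 (X p :\ j).
  lra.
have XE : X p = S0.
  apply/eqP; apply/negPn/negP => ne.
  apply: (maxd p hp); exists S0; split => //.
  by rewrite properEneq ne XS.
rewrite revenue_price XE /price /marg_sum.
by apply: eq_bigr => i iS; rewrite marg1 // /p iS.
Qed.
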